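(* Let $G$ be a graph on $n$ vertices and $A\in\mathcal{S}(G)$ a matrix with the SAP and $\operatorname{rank}(A)=r$. Then for every integer $r'$ with $r\le r'\le n$ there is a matrix $A'\in\mathcal{S}(G)$ with the SAP and $\operatorname{rank}(A')=r'$.
   Context: For a graph $G$ on vertex set $\{1,\ldots,n\}$, $\mathcal{S}(G)$ is the set of real symmetric $n\times n$ matrices whose $(i,j)$-entry for $i\neq j$ is nonzero if and only if $\{i,j\}$ is an edge (diagonal entries arbitrary). $\circ$ is the entrywise product. A symmetric matrix $A$ has the strong Arnol'd property (SAP) if $X=O$ is the only real symmetric matrix with $A\circ X=O$, $I\circ X=O$, $AX=O$. *)

(* Defs.v *)
From mathcomp Require Import all_boot all_order all_algebra.
From mathcomp Require Import reals.
Set Implicit Arguments. Unset Strict Implicit. Unset Printing Implicit Defensive.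
Import GRing.Theory Num.Theory.
Local Open Scope ring_scope.

Definition simple_graph (n : nat) (G : rel 'I_n) : Prop :=
  (forall i j, G i j = G j i) /\ (forall i, G i i = false).

Definition SG (R : realType) (n : nat) (G : rel 'I_n) (A : 'M[R]_n) : Prop :=
  A^T = A /\ (forall i j : 'I_n, i != j -> (A i j != 0) = G i j).

Definition SAP (R : realType) (n : nat) (A : 'M[R]_n) : Prop :=
  forall X : 'M[R]_n,
    X^T = X ->
    map2_mx *%R A X = 0 ->
    map2_mx *%R (1%:M : 'M[R]_n) X = 0 ->
    A *m X = 0 ->
    X = 0.

(* Main.v *)
Require Import Defs.
From mathcomp Require Import all_boot all_order all_algebra.
From mathcomp Require Import reals.
Import GRing.Theory Num.Theory.
Local Open Scope ring_scope.

Lemma step (R : realType) (n : nat) (G : rel 'I_n) (A : 'M[R]_n) :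
  SG G A -> SAP A -> (\rank A < n)%N ->
  exists A' : 'M[R]_n, [/\ SG G A', SAP A' & \rank A' = (\rank A).+1].
Proof.
move=> [AT Aoff] HS Hr.
have kerNZ : kermx A != 0.
  apply/eqP=> K0; move: (mxrank_ker A); rewrite K0 mxrank0 => /eqP.
  by rewrite eq_sym subn_eq0 leqNgt Hr.
have [u [uA uNZ]] : exists u : 'rV[R]_n, u *m A = 0 /\ u != 0.
  have [k Hk] : exists k, row k (kermx A) != 0.
    apply/existsP; apply: contraR kerNZ => /existsPn H.
    by apply/eqP/row_matrixP => k; rewrite row0; apply/eqP/negPn.
  exists (row k (kermx A)); split => //.
  by rewrite -row_mul mulmx_ker row0.
have [i ui] : exists i, u 0 i != 0.
  apply/existsP; apply: contraR uNZ => /existsPn H.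
  apply/eqP/rowP => j; rewrite mxE; apply/eqP/negPn/H.
set D : 'M[R]_n := delta_mx i i.
have DE : D = delta_mx i (0 : 'I_1) *m delta_mx 0 i by rewrite mul_delta_mx.
set c : 'M[R]_1 := u *m delta_mx i 0.
have c00 : c 0 0 = u 0 i.
  rewrite !mxE (bigD1 i) //= big1 ?addr0.
    by rewrite mxE !eqxx mulr1.
  by move=> j /negbTE ji; rewrite mxE ji mulr0.
have uA' : u *m (A + D) = u 0 i *: delta_mx 0 i.
  by rewrite mulmxDr uA add0r DE mulmxA -/c (mx11_scalar c) c00 mul_scalar_mx.
have Au : A *m u^T = 0 by rewrite -AT -trmx_mul uA trmx0.
exists (A + D); split.
- split; first by rewrite linearD /= AT /D trmx_delta.
  move=> j k jk; rewrite !mxE -Aoff //.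
  have -> : ((j == i) && (k == i)) = false.
    by apply/negP => /andP [/eqP ji /eqP ki]; move: jk; rewrite ji ki eqxx.
  by rewrite addr0.
- move=> X XT H1 H2 H3.
  have rowX : (delta_mx 0 i : 'rV[R]_n) *m X = 0.
    have : u *m ((A + D) *m X) = 0 by rewrite H3 mulmx0.
    rewrite mulmxA uA' -scalemxAl => /eqP; rewrite scaler_eq0 (negbTE ui) /=.
    by move/eqP.
  have DX : D *m X = 0 by rewrite DE -mulmxA rowX mulmx0.
  apply: HS => //.
  + apply/matrixP => j k; move/matrixP: H1 => /(_ j k); rewrite !mxE.
    have [->|jk] := eqVneq j k.
      move/matrixP: H2 => /(_ k k); rewrite !mxE eqxx mul1r => ->.
      by rewrite !mulr0.
    have -> : ((j == i) && (k == i)) = false.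
      by apply/negP => /andP [/eqP ji /eqP ki]; move: jk; rewrite ji ki eqxx.
    by rewrite addr0.
  + by move: H3; rewrite mulmxDl DX addr0.
- apply/eqP; rewrite eqn_leq; apply/andP; split.
  + apply: leq_trans (mxrank_add _ _) _.
    by rewrite /D mxrank_delta addn1.
  + apply: rank_ltmx.
    rewrite ltmxE; apply/andP; split.
    * set W := (u 0 i)^-1 *: delta_mx i 0 *m u.
      have HW : D = W *m (A + D).
        rewrite /W -mulmxA uA' -scalemxAl -scalemxAr scalerA mulVf //.
        by rewrite scale1r -DE.
      have eA : A = (1%:M - W) *m (A + D) by rewrite mulmxBl mul1mx -HW addrK.
      rewrite {1}eA.
      exact: submxMl.
    * apply/negP => /submxP [W HW].
      have : (A + D) *m u^T = W *m (A *m u^T) by rewrite HW mulmxA.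
      rewrite Au mulmx0 mulmxDl Au add0r DE -mulmxA.
      have -> : delta_mx 0 i *m u^T = (u 0 i)%:M.
        apply/matrixP => a b; rewrite !ord1 !mxE (bigD1 i) //= big1 ?addr0.
          by rewrite !mxE !eqxx mul1r.
        by move=> j /negbTE; rewrite !mxE => ->; rewrite andbF mul0r.
      move/matrixP => /(_ i 0); rewrite mul_mx_scalar !mxE !eqxx mulr1.
      by move/eqP; rewrite (negbTE ui).
Qed.

Theorem corollary3p6 (R : realType) (n : nat) (G : rel 'I_n)
    (A : 'M[R]_n) (r' : nat) :
  simple_graph G -> SG G A -> SAP A ->
  (\rank A <= r' <= n)%N ->
  exists A' : 'M[R]_n, [/\ SG G A', SAP A' & \rank A' = r'].
Proof.
move=> _ HA HS /andP [h1 h2].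
rewrite -(subnKC h1) in h2 *.
move: (r' - \rank A)%N h2 => d; clear h1 r'.
elim: d A HA HS => [|d IH] A HA HS h2.
  by exists A; rewrite addn0.
have hlt : (\rank A < n)%N.
  have h2' : (\rank A + d < n)%N by rewrite -addnS.
  exact: (leq_ltn_trans (leq_addr d (\rank A)) h2').
have [A1 [HA1 HS1 rk1]] := @step R n G A HA HS hlt.
have h3 : (\rank A1 + d <= n)%N by rewrite rk1 addSn -addnS.
have [A2 [HA2 HS2 rk2]] := IH A1 HA1 HS1 h3.
by exists A2; rewrite rk2 rk1 addSn addnS.
Qed.
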